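(* Let $\mathcal{K}$ be a field with a nonarchimedean valuation and let $B\in\mathcal{K}^{n\times n}$ be an upper triangular matrix such that $\nu(\det B(\{1,\dots,|S|\},S))\in\mathbb{R}$ for all $S\subseteq[n]$ and the function $2^{[n]}\to\mathbb{R}$, $S\mapsto \nu(\det B(\{1,\dots,|S|\},S))$, is submodular. Then \[ \nu(\det B(\{1,\dots,|S|\},S))\;\ge\;\nu(\det B(T,S)) \] for all $S,T\subseteq[n]$ with $|S|=|T|$.
   Context: $\nu=-\mathrm{val}$ is the negative of the valuation, extended by $\nu(0)=-\infty$. $B(T,S)$ is the submatrix with rows $T$ and columns $S$, and the determinant of the empty matrix is $1$. A function $F:2^{[n]}\to\mathbb{R}$ is submodular if $F(S\cap T)+F(S\cup T)\le F(S)+F(T)$ for all $S,T$. *)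

(* Defs.v *)
From HB Require Import structures.
From mathcomp Require Import all_boot all_order all_algebra.
From mathcomp Require Import reals constructive_ereal.
Set Implicit Arguments. Unset Strict Implicit. Unset Printing Implicit Defensive.
Import Order.TTheory GRing.Theory Num.Theory.
Local Open Scope ring_scope.

(* A (real-valued) nonarchimedean valuation on a field K: val is only
   meaningful on nonzero elements (val 0 = +oo by convention, encoded in nu). *)
Definition nonarch_valuation (K : fieldType) (R : realType) (val : K -> R) : Prop :=
  (forall x y : K, x != 0 -> y != 0 -> val (x * y) = val x + val y) /\
  (forall x y : K, x != 0 -> y != 0 -> x + y != 0 ->
     Num.min (val x) (val y) <= val (x + y)).

Definition nu (K : fieldType) (R : realType) (val : K -> R) (x : K) : \bar R :=
  if x == 0 then -oo%E else (- val x)%:E.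

(* det B(T,S): rows T and columns S, both listed in increasing order;
   only meaningful when #|T| = #|S| (otherwise set to 0, never used). *)
Definition minor (K : fieldType) (n : nat) (B : 'M[K]_n) (T S : {set 'I_n}) : K :=
  if #|S| =P #|T| is ReflectT h then
    \det (\matrix_(i < #|S|, j < #|S|) B (enum_val (cast_ord h i)) (enum_val j))
  else 0.

(* the row set {1,...,k} (0-based: indices < k) *)
Definition first_rows (n k : nat) : {set 'I_n} := [set i : 'I_n | (i < k)%N].

Definition upper_triangular (K : fieldType) (n : nat) (B : 'M[K]_n) : Prop :=
  forall i j : 'I_n, (j < i)%N -> B i j = 0.

Definition submodular (n : nat) (R : realType) (F : {set 'I_n} -> \bar R) : Prop :=
  forall S T : {set 'I_n}, (F (S :&: T) + F (S :|: T) <= F S + F T)%E.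

(* Main.v *)
Require Import Defs.
From HB Require Import structures.
From mathcomp Require Import all_boot all_order all_algebra.
From mathcomp Require Import reals constructive_ereal.
From mathcomp Require Import fingroup perm.
From mathcomp Require Import lra ring.
Set Implicit Arguments. Unset Strict Implicit. Unset Printing Implicit Defensive.
Import Order.TTheory GRing.Theory Num.Theory.
Local Open Scope ring_scope.

Section Val.
Variables (K : fieldType) (R : realType) (vl : K -> R).
Hypothesis hval : nonarch_valuation vl.

Definition vge (x : K) (b : R) := (x == 0) || (b <= vl x).

Lemma valM x y : x != 0 -> y != 0 -> vl (x * y) = vl x + vl y.
Proof. by move=> hx hy; case: hval => h _; apply: h. Qed.

Lemma val1 : vl 1 = 0.
Proof. have := valM (oner_neq0 K) (oner_neq0 K); rewrite mulr1 => h; lra. Qed.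

Lemma valN1 : vl (-1) = 0.
Proof.
have h1 : (-1 : K) != 0 by rewrite oppr_eq0 oner_neq0.
have := valM h1 h1; rewrite mulrNN mulr1 val1 => h; lra.
Qed.

Lemma valN x : vl (- x) = vl x.
Proof.
have [->|x0] := eqVneq x 0; first by rewrite oppr0.
have h1 : (-1 : K) != 0 by rewrite oppr_eq0 oner_neq0.
by rewrite -mulN1r valM // valN1 add0r.
Qed.

Lemma valV x : x != 0 -> vl x^-1 = - vl x.
Proof.
move=> x0; have xi0 : x^-1 != 0 by rewrite invr_eq0.
have := valM x0 xi0; rewrite mulfV // val1 => h; lra.
Qed.

Lemma vge0 b : vge 0 b. Proof. by rewrite /vge eqxx. Qed.

Lemma vge_le x b b' : b' <= b -> vge x b -> vge x b'.
Proof. rewrite /vge => hb /orP[->//|h]; apply/orP; right; exact: le_trans h. Qed.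

Lemma vgeD x y b : vge x b -> vge y b -> vge (x + y) b.
Proof.
move=> /orP[/eqP->|hx]; first by rewrite add0r.
move=> /orP[/eqP->|hy]; first by rewrite addr0; apply/orP; right.
have [->|x0] := eqVneq x 0; first by rewrite add0r; apply/orP; right.
have [->|y0] := eqVneq y 0; first by rewrite addr0; apply/orP; right.
have [->|s0] := eqVneq (x + y) 0; first exact: vge0.
apply/orP; right; case: hval => _ /(_ x y x0 y0 s0) h.
apply: le_trans h; rewrite le_min hx hy //.
Qed.

Lemma vgeN x b : vge x b -> vge (- x) b.
Proof. by rewrite /vge oppr_eq0 valN. Qed.

Lemma vgeM x y a b : vge x a -> vge y b -> vge (x * y) (a + b).
Proof.
move=> /orP[/eqP->|hx]; first by rewrite mul0r vge0.
move=> /orP[/eqP->|hy]; first by rewrite mulr0 vge0.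
have [->|x0] := eqVneq x 0; first by rewrite mul0r vge0.
have [->|y0] := eqVneq y 0; first by rewrite mulr0 vge0.
apply/orP; right; rewrite valM //; exact: lerD.
Qed.

Lemma vge_sum I (s : seq I) (P : pred I) (F : I -> K) b :
  (forall i, P i -> vge (F i) b) -> vge (\sum_(i <- s | P i) F i) b.
Proof. move=> h; apply: (big_ind (fun x => vge x b)); [exact: vge0|move=> x y; exact: vgeD|exact: h]. Qed.

Lemma vge_sign (s : bool) : vge ((-1) ^+ s) 0.
Proof. by case: s; rewrite /vge ?expr1 ?expr0 ?valN1 ?val1 lexx orbT. Qed.

Lemma vge_prod I (s : seq I) (P : pred I) (F : I -> K) :
  (forall i, P i -> vge (F i) 0) -> vge (\prod_(i <- s | P i) F i) 0.
Proof.
move=> h; apply: (big_ind (fun x => vge x 0)).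
- by rewrite /vge val1 lexx orbT.
- by move=> x y hx hy; rewrite -[0]addr0; exact: vgeM.
- exact: h.
Qed.

Lemma vge_det k (A : 'M[K]_k) : (forall i j, vge (A i j) 0) -> vge (\det A) 0.
Proof.
move=> h; rewrite /determinant; apply: vge_sum => s _.
rewrite -[0]addr0; apply: vgeM; first exact: vge_sign.
by apply: vge_prod => i _.
Qed.

Lemma vge_val x : vge x (vl x).
Proof. by rewrite /vge lexx orbT. Qed.

End Val.
Section Mat.
Variables (K : fieldType) (R : realType) (vl : K -> R).
Hypothesis hval : nonarch_valuation vl.
Variables (n' : nat) (B : 'M[K]_n'.+1).
Local Notation n := n'.+1.
Hypothesis hB : upper_triangular B.
Hypothesis hfin : forall S : {set 'I_n},
      nu vl (minor B (first_rows n #|S|) S) \is a fin_num.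
Hypothesis hsub : submodular (fun S : {set 'I_n} => nu vl (minor B (first_rows n #|S|) S)).

Definition D k (r c : 'I_k -> 'I_n) : K := \det (\matrix_(i, j) B (r i) (c j)).
Definition im k (c : 'I_k -> 'I_n) : {set 'I_n} := [set c i | i : 'I_k].
Definition V (X : {set 'I_n}) : R := vl (minor B (first_rows n #|X|) X).
Definition idx k (i : 'I_k) : 'I_n := inord i.

Lemma minor_neq0 (X : {set 'I_n}) : minor B (first_rows n #|X|) X != 0.
Proof. by apply/negP => /eqP h; move: (hfin X); rewrite /nu h eqxx. Qed.

Lemma nuE (X : {set 'I_n}) : nu vl (minor B (first_rows n #|X|) X) = (- V X)%:E.
Proof. by rewrite /nu (negPf (minor_neq0 X)). Qed.

Lemma Vsuper (S T : {set 'I_n}) : V S + V T <= V (S :&: T) + V (S :|: T).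
Proof.
have := hsub S T; rewrite /= !nuE -!EFinD lee_fin => h; lra.
Qed.

Lemma idx_val k (i : 'I_k) : (k <= n)%N -> idx i = i :> nat.
Proof. by move=> hk; rewrite /idx inordK // (leq_trans (ltn_ord i) hk). Qed.

Lemma idx_inj k : (k <= n)%N -> injective (@idx k).
Proof. by move=> hk i j h; apply/val_inj; move: (congr1 val h) => /=; rewrite !idx_val. Qed.

Lemma card_im k (c : 'I_k -> 'I_n) : injective c -> #|im c| = k.
Proof. by move=> ci; rewrite card_imset // card_ord. Qed.

Lemma im_idx k : (k <= n)%N -> im (@idx k) = first_rows n k.
Proof.
move=> hk; apply/setP => x; rewrite /first_rows inE; apply/imsetP/idP => [[i _ ->]|xk].
  by rewrite idx_val.
by exists (Ordinal xk) => //; apply/val_inj => /=; rewrite idx_val.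
Qed.

Lemma card_first_rows k : (k <= n)%N -> #|first_rows n k| = k.
Proof. by move=> hk; rewrite -(im_idx hk) card_im //; exact: idx_inj. Qed.

Lemma card_le_n (X : {set 'I_n}) : (#|X| <= n)%N.
Proof. by rewrite -[X in (_ <= X)%N](card_ord n) max_card. Qed.

Lemma D_cast k1 k2 (e : k1 = k2) (r c : 'I_k1 -> 'I_n) :
  D r c = D (r \o cast_ord (esym e)) (c \o cast_ord (esym e)).
Proof.
case: k2 / e; rewrite /D; congr (\det _); apply/matrixP => i j; rewrite !mxE /=.
by rewrite !cast_ord_id.
Qed.

Lemma im_cast k1 k2 (e : k2 = k1) (c : 'I_k1 -> 'I_n) :
  im (c \o cast_ord e) = im c.
Proof.
apply/setP => x; apply/imsetP/imsetP => [[i _ ->]|[i _ ->]].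
  by exists (cast_ord e i).
by exists (cast_ord (esym e) i) => //=; rewrite cast_ordKV.
Qed.

Lemma im_enum_val (A : {set 'I_n}) : im (@enum_val _ (mem A)) = A.
Proof.
apply/setP => x; apply/imsetP/idP => [[i _ ->]|xA]; first exact: enum_valP.
by exists (enum_rank_in xA x) => //; rewrite enum_rankK_in.
Qed.

Lemma exists_perm k (f g : 'I_k -> 'I_n) :
  injective f -> injective g -> im f = im g -> exists s : 'S_k, forall i, f i = g (s i).
Proof.
move=> fi gi e.
have hg i : exists j, g j = f i.
  have : f i \in im g by rewrite -e; apply/imsetP; exists i.
  by case/imsetP => j _ ->; exists j.
pose h i := odflt i [pick j | g j == f i].
have hh i : g (h i) = f i.
  rewrite /h; case: pickP => [j /eqP //|/= none].
  by case: (hg i) => j hj; move: (none j); rewrite hj eqxx.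
have hinj : injective h by move=> i j hij; apply: fi; rewrite -hh hij hh.
by exists (perm hinj) => i; rewrite permE hh.
Qed.

Lemma val_sign (b : bool) (x : K) : vl ((-1) ^+ b * x) = vl x.
Proof. by case: b; rewrite ?expr1 ?expr0 ?mulN1r ?mul1r ?(valN hval). Qed.

Lemma sign_eq0 (b : bool) (x : K) : ((-1) ^+ b * x == 0) = (x == 0).
Proof. by rewrite mulf_eq0 signr_eq0. Qed.

Lemma Lperm k (r1 r2 c1 c2 : 'I_k -> 'I_n) :
  injective r1 -> injective r2 -> injective c1 -> injective c2 ->
  im r1 = im r2 -> im c1 = im c2 ->
  exists b : bool, D r1 c1 = (-1) ^+ b * D r2 c2.
Proof.
move=> r1i r2i c1i c2i er ec.
have [s hs] := exists_perm r1i r2i er.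
have [t ht] := exists_perm c1i c2i ec.
rewrite /D.
have -> : \matrix_(i, j) B (r1 i) (c1 j) =
   perm_mx s *m (\matrix_(i, j) B (r2 i) (c2 j)) *m perm_mx t^-1.
  rewrite -row_permE -col_permE; apply/matrixP => i j; rewrite !mxE hs ht.
  reflexivity.
rewrite !det_mulmx !det_perm.
exists (odd_perm s (+) odd_perm t^-1).
by rewrite signr_addb -!mulrA [\det _ * _]mulrC.
Qed.

Lemma PI k (r c : 'I_k -> 'I_n) : injective r -> injective c ->
  im r = first_rows n k -> D r c != 0 /\ vl (D r c) = V (im c).
Proof.
move=> ri ci er.
have hk : #|im c| = k by rewrite card_im.
move: (minor_neq0 (im c)); rewrite /V /minor; case: eqP => h; last first.
  by rewrite card_first_rows ?card_le_n in h.
move=> hm; rewrite (D_cast (esym hk)).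
have := @Lperm #|im c| (r \o cast_ord (esym (esym hk))) (fun i => enum_val (cast_ord h i))
   (c \o cast_ord (esym (esym hk))) (fun j => enum_val j).
case.
- by move=> i j /= /ri /cast_ord_inj.
- by move=> i j /= /enum_val_inj /cast_ord_inj.
- by move=> i j /= /ci /cast_ord_inj.
- exact: enum_val_inj.
- rewrite im_cast er.
  have -> : im (fun i => enum_val (cast_ord h i)) = im (@enum_val _ (mem (first_rows n #|im c|))).
    exact: (im_cast h).
  by rewrite im_enum_val hk.
- by rewrite im_cast im_enum_val.
move=> b ->; split; first by rewrite sign_eq0; exact: hm.
by rewrite val_sign.
Qed.

Lemma det_zero_row k (A : 'M[K]_k) i : (forall j, A i j = 0) -> \det A = 0.
Proof. by move=> h; rewrite (expand_det_row _ i) big1 // => j _; rewrite h mul0r. Qed.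

Lemma D_eq_rows k (r c : 'I_k -> 'I_n) i1 i2 : i1 != i2 -> r i1 = r i2 -> D r c = 0.
Proof. by move=> ne e; apply: (determinant_alternate ne) => j; rewrite !mxE e. Qed.

Lemma cof_D k (r c : 'I_k.+1 -> 'I_n) i0 j0 :
  cofactor (\matrix_(i, j) B (r i) (c j)) i0 j0 =
  (-1) ^+ (i0 + j0) * D (r \o lift i0) (c \o lift j0).
Proof. by rewrite /cofactor /D; congr (_ * \det _); apply/matrixP => i j; rewrite !mxE. Qed.

Definition ext j (cY : 'I_j -> 'I_n) (y : 'I_n) : 'I_j.+1 -> 'I_n :=
  fun i => if unlift ord_max i is Some i' then cY i' else y.

Lemma ext_max j (cY : 'I_j -> 'I_n) y : ext cY y ord_max = y.
Proof. by rewrite /ext unlift_none. Qed.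

Lemma ext_lift j (cY : 'I_j -> 'I_n) y i : ext cY y (lift ord_max i) = cY i.
Proof. by rewrite /ext liftK. Qed.

Lemma im_ext j (cY : 'I_j -> 'I_n) y : im (ext cY y) = y |: im cY.
Proof.
apply/setP => x; rewrite in_setU1; apply/imsetP/orP => [[i _ ->]|[/eqP->|/imsetP[i _ ->]]].
- rewrite /ext; case: (unlift _ i) => [i'|]; last by left.
  by right; apply/imsetP; exists i'.
- by exists ord_max => //; rewrite ext_max.
- by exists (lift ord_max i) => //; rewrite ext_lift.
Qed.

Lemma ext_inj j (cY : 'I_j -> 'I_n) y : injective cY -> y \notin im cY -> injective (ext cY y).
Proof.
move=> ci ny i1 i2; rewrite /ext.
case: (unliftP ord_max i1) => [i1'|] ->; case: (unliftP ord_max i2) => [i2'|] -> //.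
- by move/ci ->.
- by move=> e; case/negP: ny; rewrite -e; apply/imsetP; exists i1'.
- by move=> e; case/negP: ny; rewrite e; apply/imsetP; exists i2'.
Qed.

Definition Claim m := forall k (r c : 'I_k -> 'I_n), injective c ->
  (forall i, (r i < m)%N) -> (forall i, (c i < m)%N) -> vge vl (D r c) (V (im c)).

Lemma card_le_m k m (c : 'I_k -> 'I_n) : injective c -> (forall i, (c i < m)%N) ->
  (m <= n)%N -> (k <= m)%N.
Proof.
move=> ci hc mn; rewrite -(card_im ci) -(card_first_rows mn); apply: subset_leq_card.
by apply/subsetP => x /imsetP[i _ ->]; rewrite /first_rows inE.
Qed.


Section Step.
Variable m : nat.
Hypothesis hm : (m < n)%N.
Hypothesis IH : Claim m.

Let z : 'I_n := Ordinal hm.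

Definition good j (cY : 'I_j -> 'I_n) := injective cY /\ forall i, (cY i < m)%N.

Definition N j (cY : 'I_j -> 'I_n) : 'M[K]_j := \matrix_(l, j') B (idx l) (cY j').

Lemma good_le j (cY : 'I_j -> 'I_n) : good cY -> (j <= m)%N.
Proof. by case=> ci hc; apply: (card_le_m ci hc); exact: ltnW. Qed.

Lemma good_PI j (cY : 'I_j -> 'I_n) : good cY ->
  \det (N cY) != 0 /\ vl (\det (N cY)) = V (im cY).
Proof.
move=> g; have jn : (j <= n)%N by apply: leq_trans (good_le g) (ltnW hm).
by apply: PI; [exact: idx_inj|case: g|exact: im_idx].
Qed.

Lemma N_unit j (cY : 'I_j -> 'I_n) : good cY -> N cY \in unitmx.
Proof. by move=> g; rewrite unitmxE unitfE; case: (good_PI g). Qed.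

Definition a j (cY : 'I_j -> 'I_n) (t : 'I_n) : 'rV[K]_j :=
  (\row_j' B t (cY j')) *m invmx (N cY).

Definition rho j (cY : 'I_j -> 'I_n) (t : 'I_n) : K :=
  B t z - \sum_l a cY t 0 l * B (idx l) z.

Lemma a_mul j (cY : 'I_j -> 'I_n) t : good cY -> a cY t *m N cY = \row_j' B t (cY j').
Proof. by move=> g; rewrite /a mulmxKV // N_unit. Qed.

Lemma cramer j (cY : 'I_j -> 'I_n) (t : 'I_n) (l : 'I_j) : good cY ->
  a cY t 0 l = (\det (N cY))^-1 * D (fun i => if i == l then t else idx i) cY.
Proof.
move=> g; rewrite /a /invmx N_unit // -scalemxAr mxE; congr (_ * _).
rewrite mxE /D (expand_det_row _ l); apply: eq_bigr => i _.
rewrite !mxE eqxx; congr (_ * _).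
rewrite /cofactor; congr (_ * \det _); apply/matrixP => i' j'; rewrite !mxE.
by rewrite eq_sym (negPf (neq_lift _ _)).
Qed.

Lemma AI j (cY : 'I_j -> 'I_n) (t : 'I_n) (l : 'I_j) : good cY -> (t < m)%N -> vge vl (a cY t 0 l) 0.
Proof.
move=> g tm; rewrite cramer //.
have [d0 dv] := good_PI g.
have -> : 0 = - V (im cY) + V (im cY) by rewrite addNr.
apply: vgeM => //; first by rewrite -dv -(valV hval d0); exact: vge_val.
apply: IH; [by case: g| |by case: g].
have jm := good_le g.
move=> i; case: eqP => // _; rewrite idx_val ?(leq_trans (ltn_ord i)) //.
by apply: leq_trans jm (ltnW hm).
Qed.
Definition Pm j (cY : 'I_j -> 'I_n) (r : 'I_j.+1 -> 'I_n) : 'M[K]_j.+1 :=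
  \matrix_(i, l) if unlift ord_max l is Some l' then a cY (r i) 0 l' else rho cY (r i).

Lemma FL j (cY : 'I_j -> 'I_n) (c r : 'I_j.+1 -> 'I_n) i0 : good cY -> c i0 = z ->
  (forall i, c (lift i0 i) = cY i) ->
  D r c = \det (Pm cY r) * ((-1) ^+ (@ord_max j + i0) * D (@idx j) cY).
Proof.
move=> g ci0 cl.
pose Nb : 'M[K]_j.+1 := \matrix_(l, j')
  (if unlift ord_max l is Some l' then B (idx l') (c j') else (j' == i0)%:R).
have -> : D r c = \det (Pm cY r *m Nb).
  rewrite /D; congr (\det _); apply/matrixP => i j'; rewrite !mxE.
  rewrite (bigD1_ord ord_max) //= !mxE unlift_none.
  under eq_bigr do rewrite !mxE liftK.
  case: (unliftP i0 j') => [j''|] ->.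
  - rewrite eq_sym (negPf (neq_lift _ _)) mulr0 add0r cl.
    have := a_mul (r i) g; move/matrixP/(_ 0 j''); rewrite !mxE => <-.
    by apply: eq_bigr => l _; rewrite !mxE.
  - by rewrite eqxx mulr1 ci0 /rho subrK.
rewrite det_mulmx; congr (_ * _).
rewrite (expand_det_row _ ord_max) (bigD1 i0) //= big1 => [|j' nj]; last first.
  by rewrite !mxE unlift_none (negPf nj) mul0r.
rewrite addr0 !mxE unlift_none eqxx mul1r /cofactor; congr (_ * \det _).
by apply/matrixP => i j'; rewrite !mxE liftK cl.
Qed.
Lemma a_small j (cY : 'I_j -> 'I_n) (t : 'I_n) (ht : (t < j)%N) l : good cY ->
  a cY t 0 l = (Ordinal ht == l)%:R.
Proof.
move=> g; have jn : (j <= n)%N by apply: leq_trans (good_le g) (ltnW hm).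
rewrite /a.
have -> : \row_j' B t (cY j') = row (Ordinal ht) (N cY).
  apply/matrixP => i j'; rewrite !mxE; congr (B _ _).
  by apply/val_inj; rewrite /= idx_val.
by rewrite -row_mul mulmxV ?N_unit // !mxE.
Qed.

Lemma rho_small j (cY : 'I_j -> 'I_n) (t : 'I_n) : good cY -> (t < j)%N -> rho cY t = 0.
Proof.
move=> g ht; have jn : (j <= n)%N by apply: leq_trans (good_le g) (ltnW hm).
rewrite /rho (bigD1 (Ordinal ht)) //= big1 => [|l nl]; last first.
  by rewrite a_small // eq_sym (negPf nl) mul0r.
rewrite a_small // eqxx mul1r addr0.
have -> : idx (Ordinal ht) = t by apply/val_inj; rewrite /= idx_val.
by rewrite subrr.
Qed.

Lemma vl_signn (p : nat) (x : K) : vl ((-1) ^+ p * x) = vl x.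
Proof. by rewrite -signr_odd val_sign. Qed.

Lemma vl_signp (p : nat) : vl ((-1) ^+ p : K) = 0.
Proof. by have := vl_signn p 1; rewrite mulr1 (val1 hval). Qed.

Lemma EQ j (cY : 'I_j -> 'I_n) : good cY -> (j < m)%N ->
  vge vl (rho cY (idx (@ord_max j))) (V (z |: im cY) - V (im cY)).
Proof.
move=> g jm; have jn : (j.+1 <= n)%N by apply: leq_trans jm (ltnW hm).
have zY : z \notin im cY.
  by apply/imsetP => -[i _ e]; case: g => _ /(_ i); rewrite -e /= ltnn.
have e := @FL j cY (ext cY z) (@idx j.+1) ord_max g (ext_max cY z) (ext_lift cY z).
have [nz vv] := @PI j.+1 (@idx j.+1) (ext cY z) (idx_inj jn) (ext_inj (proj1 g) zY) (im_idx jn).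
have dP : \det (Pm cY (@idx j.+1)) =
    rho cY (idx (@ord_max j)) * ((-1) ^+ (@ord_max j + @ord_max j) * 1).
  rewrite (expand_det_col _ ord_max) (bigD1 ord_max) //= big1 => [|i ni]; last first.
    case: (unliftP ord_max i) ni => [i' -> _|->]; last by rewrite eqxx.
    rewrite !mxE unlift_none rho_small ?mul0r //= idx_val //.
    by rewrite lift_max.
  rewrite addr0 !mxE unlift_none /cofactor; congr (_ * (_ * _)).
  rewrite -(det1 _ j); congr (\det _); apply/matrixP => i l; rewrite !mxE liftK.
  have li : (lift ord_max i : nat) = i by exact: (@lift_max j i).
  have hi : (idx (lift ord_max i) < j)%N.
    by rewrite idx_val ?(leq_trans (ltn_ord _) jn) // li.
  apply: (etrans (a_small hi l g)); congr ((_ : bool)%:R).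
  by rewrite -[RHS]val_eqE -[LHS]val_eqE /= idx_val // li.
rewrite e dP in nz vv.
have [dY0 dYv] := good_PI g.
rewrite im_ext in vv.
move: nz vv; rewrite !mulf_eq0 !negb_or => /andP[/andP[r0 _] _].
rewrite -!mulrA !valM ?mulf_neq0 ?signr_eq0 ?oner_eq0 //.
rewrite !vl_signp (val1 hval) !add0r.
rewrite /N in dYv; move: dYv; rewrite /D => ->.
by move=> h; rewrite /vge; apply/orP; right; rewrite -h; lra.
Qed.
Lemma good_ext j (cY : 'I_j -> 'I_n) (y : 'I_n) : good cY -> y \notin im cY -> (y < m)%N ->
  good (ext cY y).
Proof.
move=> [ci hc] ny ym; split; first exact: ext_inj.
by move=> i; rewrite /ext; case: (unlift _ i).
Qed.

Lemma idx_lift j (l : 'I_j) : (j.+1 <= n)%N -> idx (lift ord_max l) = idx l.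
Proof. by move=> jn; rewrite /idx lift_max. Qed.

Lemma a_mulE j (cY : 'I_j -> 'I_n) t j' : good cY ->
  \sum_l a cY t 0 l * B (idx l) (cY j') = B t (cY j').
Proof.
move=> g; have := a_mul t g; move/matrixP/(_ 0 j'); rewrite !mxE => <-.
by apply: eq_bigr => l _; congr (_ * _); rewrite /N mxE.
Qed.

Lemma a_unique j (cY : 'I_j -> 'I_n) t (w : 'rV[K]_j) : good cY ->
  (forall j', \sum_l w 0 l * B (idx l) (cY j') = B t (cY j')) -> a cY t = w.
Proof.
move=> g h; apply: (can_inj (mulmxK (N_unit g))); rewrite a_mul //.
apply/matrixP => i j'; rewrite (ord1 i) !mxE -h; apply: eq_bigr => l _; rewrite mxE.
done.
Qed.

Local Opaque a.

Lemma ID j (cY : 'I_j -> 'I_n) (y : 'I_n) (t : 'I_n) : good cY -> y \notin im cY -> (y < m)%N ->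
  rho cY t = rho (ext cY y) t + a (ext cY y) t 0 ord_max * rho cY (idx (@ord_max j)).
Proof.
move=> g ny ym; have g' := good_ext g ny ym.
have jn : (j.+1 <= n)%N by apply: leq_trans (good_le g') (ltnW hm).
have ha : a cY t = \row_l (a (ext cY y) t 0 (lift ord_max l) +
     a (ext cY y) t 0 ord_max * a cY (idx (@ord_max j)) 0 l).
  apply: a_unique => // j'.
  under eq_bigr do rewrite mxE mulrDl -mulrA.
  rewrite big_split /= -mulr_sumr a_mulE //.
  have h := a_mulE t (lift ord_max j') g'; rewrite ext_lift in h; rewrite -h.
  rewrite (bigD1_ord ord_max) //= addrC; congr (_ + _).
  by apply: eq_bigr => l _; rewrite idx_lift.
rewrite /rho ha.
under eq_bigr do rewrite mxE mulrDl -mulrA.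
rewrite big_split /= -mulr_sumr.
rewrite (bigD1_ord ord_max (P := predT)) //=.
under [X in _ = B t z - (_ + X) + _]eq_bigr do rewrite idx_lift //.
set S1 := \sum_(i < j) _.
set S2 := \sum_(i < j) _.
by ring.
Qed.
Lemma super_step (Y : {set 'I_n}) (y : 'I_n) : y \notin Y -> z \notin Y -> y != z ->
  V (z |: Y) - V Y <= V (z |: (y |: Y)) - V (y |: Y).
Proof.
move=> ny nz yz.
have := Vsuper (y |: Y) (z |: Y).
have -> : (y |: Y) :&: (z |: Y) = Y.
  apply/setP => x; rewrite !inE; case xy: (x == y); case xz: (x == z); rewrite /= ?andbb ?andbT //.
  by move/eqP: xy => e; move/eqP: xz; rewrite e => e'; rewrite e' eqxx in yz.
have e : (y |: Y) :|: (z |: Y) = z |: (y |: Y).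
  by apply/setP => w; rewrite !inE; case: (w == y); case: (w == z); case: (w \in Y).
by rewrite e => h; lra.
Qed.

Lemma Kl d : forall j (cY : 'I_j -> 'I_n), (j + d = m)%N -> good cY ->
  forall t : 'I_n, (t < m)%N -> vge vl (rho cY t) (V (z |: im cY) - V (im cY)).
Proof.
elim: d => [|d IHd] j cY hjd g t tm.
  by rewrite addn0 in hjd; rewrite rho_small ?vge0 // hjd.
have jm : (j < m)%N by rewrite -hjd addnS ltnS leq_addr.
have jn : (j.+1 <= n)%N by apply: leq_trans jm (ltnW hm).
case: (ltngtP t j) => [tj|jt|tj]; first by rewrite rho_small ?vge0.
- case: (pickP (fun y : 'I_n => (y < m)%N && (y \notin im cY))) => [y /andP[ym ny]|none]; last first.
    have : first_rows n m \subset im cY.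
      apply/subsetP => x; rewrite /first_rows inE => xm.
      by move: (none x); rewrite xm /= => /negbFE.
    move/subset_leq_card; rewrite card_first_rows ?(ltnW hm) // card_im; last by case: g.
    by rewrite leqNgt jm.
  have g' := good_ext g ny ym.
  rewrite (ID t g ny ym).
  have yz : y != z by rewrite -val_eqE /= neq_ltn ym.
  have nzY : z \notin im cY.
    by apply/imsetP => -[i _ e]; case: g => _ /(_ i); rewrite -e /= ltnn.
  apply: (vgeD hval).
    have hd : (j.+1 + d)%N = m by rewrite addSnnS.
    apply: (vge_le _ (IHd j.+1 (ext cY y) hd g' t tm)).
    rewrite im_ext; exact: super_step.
  rewrite -[X in vge _ _ X]add0r; apply: (vgeM hval); first exact: AI.
  exact: EQ.
- have -> : t = idx (@ord_max j) by apply/val_inj; rewrite /= idx_val.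
  exact: EQ.
Qed.
Lemma lt_z (x : 'I_n) : (x < m.+1)%N -> x != z -> (x < m)%N.
Proof. by rewrite ltnS leq_eqVlt -val_eqE /= => /orP[->|]. Qed.

Lemma vge_signp (p : nat) : vge vl ((-1) ^+ p : K) 0.
Proof. by rewrite -signr_odd; exact: vge_sign. Qed.

Lemma DIAG : B z z != 0 /\ vl (B z z) = V (first_rows n m.+1) - V (first_rows n m).
Proof.
have hm' : (m <= n)%N := ltnW hm.
have [n1 v1] := @PI m.+1 (@idx m.+1) (@idx m.+1) (idx_inj hm) (idx_inj hm) (im_idx hm).
have [n0 v0] := @PI m (@idx m) (@idx m) (idx_inj hm') (idx_inj hm') (im_idx hm').
rewrite im_idx // in v1; rewrite im_idx // in v0.
have iz : idx (@ord_max m) = z by apply/val_inj; rewrite /= idx_val.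
have e : D (@idx m.+1) (@idx m.+1) = B z z * D (@idx m) (@idx m).
  rewrite {1}/D (expand_det_row _ ord_max) (bigD1 ord_max) //= big1 => [|j nj]; last first.
    rewrite mxE iz hB ?mul0r //= idx_val //.
    by rewrite ltn_neqAle -ltnS ltn_ord andbT; move: nj; rewrite -val_eqE.
  rewrite addr0 mxE iz cof_D -signr_odd oddD addbb expr0 mul1r; congr (_ * _).
  by rewrite /D; congr (\det _); apply/matrixP => i j; rewrite !mxE /= !idx_lift.
rewrite e mulf_eq0 negb_or in n1; case/andP: n1 => bz _; split => //.
by move: v1; rewrite e valM // v0 => h; lra.
Qed.

Lemma Claim_step : Claim m.+1.
Proof.
move=> k r c ci hr hc.
case: (boolP [exists i, c i == z]) => [/existsP[i0 /eqP ci0]|/existsPn noz]; last first.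
  have hc' i : (c i < m)%N by apply: lt_z (hc i) (noz i).
  case: (boolP [exists i, r i == z]) => [/existsP[i1 /eqP ri1]|/existsPn norz].
    by rewrite /D (det_zero_row (i := i1)) ?vge0 // => j; rewrite mxE ri1 hB.
  by apply: IH => // i; apply: lt_z (hr i) (norz i).
move: ci0; move: i0; case: k r c ci hr hc => [|j] r c ci hr hc i0 ci0; first by have := ltn_ord i0.
pose cY := c \o lift i0.
have ncz i : c (lift i0 i) != z.
  by rewrite -ci0; apply/eqP => /ci /eqP; rewrite eq_sym (negPf (neq_lift _ _)).
have gY : good cY.
  split; first by move=> a1 a2 /ci /lift_inj.
  by move=> i; apply: lt_z (hc _) (ncz i).
have im_c : im c = z |: im cY.
  apply/setP => x; rewrite in_setU1; apply/imsetP/orP => [[i _ ->]|[/eqP->|/imsetP[i _ ->]]].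
  - case: (unliftP i0 i) => [i'|] ->; last by left; rewrite ci0.
    by right; apply/imsetP; exists i'.
  - by exists i0.
  - by exists (lift i0 i).
have nzY : z \notin im cY by apply/imsetP => -[i _ e]; move: (ncz i); rewrite e eqxx.
case: (boolP [exists i, r i == z]) => [/existsP[i1 /eqP ri1]|/existsPn norz].
  case: (boolP [exists i2, (i2 != i1) && (r i2 == z)]) => [/existsP[i2 /andP[ne /eqP ri2]]|/existsPn noo].
    by rewrite (D_eq_rows _ ne (etrans ri2 (esym ri1))) vge0.
  rewrite /D (expand_det_row _ i1) (bigD1 i0) //= big1 => [|j' nj]; last first.
    rewrite mxE ri1 hB ?mul0r //; apply: lt_z (hc j') _.
    by rewrite -ci0; apply/eqP => /ci /eqP; rewrite (negPf nj).
  rewrite addr0 mxE ri1 ci0 cof_D.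
  have hr' i : (r (lift i1 i) < m)%N.
    apply: lt_z (hr _) _; move: (noo (lift i1 i)); rewrite eq_sym (negPf (neq_lift _ _)) /=.
    done.
  have hIH := @IH _ (r \o lift i1) cY (proj1 gY) hr' (proj2 gY).
  have [bz bv] := DIAG.
  apply: (vge_le _ (vgeM hval (vge_val vl (B z z)) (vgeM hval (vge_signp _) hIH))).
  rewrite bv add0r im_c.
  have := Vsuper (z |: im cY) (first_rows n m).
  have -> : (z |: im cY) :&: first_rows n m = im cY.
    apply/setP => x; rewrite !inE; case xz: (x == z) => /=.
      by move/eqP: xz => ->; rewrite ltnn (negPf nzY).
    case xY: (x \in im cY); rewrite ?andbF ?andbT //.
    by case/imsetP: xY => i _ ->; case: gY => _ /(_ i).
  have -> : (z |: im cY) :|: first_rows n m = first_rows n m.+1.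
    apply/setP => x; rewrite !inE; apply/idP/idP.
      case/orP => [/orP[/eqP-> //|/imsetP[i _ ->]]|]; last exact: ltnW.
      by apply: ltnW; case: gY => _ /(_ i).
    rewrite ltnS leq_eqVlt => /orP[/eqP e|->]; last by rewrite orbT.
    have -> : x = z by apply/val_inj => /=; rewrite e.
    by rewrite eqxx.

  by move=> h; lra.
have hr' i : (r i < m)%N by apply: lt_z (hr i) (norz i).
rewrite (@FL j cY c r i0 gY ci0 (fun i => erefl)).
have [dY0 dYv] := good_PI gY.
have -> : V (im c) = (V (z |: im cY) - V (im cY)) + (0 + 0) + (0 + V (im cY)).
  by rewrite im_c; lra.
apply: (vgeM hval); last first.
  by apply: (vgeM hval); [exact: vge_signp|rewrite -dYv; exact: vge_val].
rewrite (expand_det_col _ ord_max); apply: (vge_sum hval) => i _.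
rewrite mxE unlift_none; apply: (vgeM hval).
  have hd : (j + (m - j))%N = m by rewrite subnKC // (good_le gY).
  exact: (Kl hd gY (hr' i)).
rewrite /cofactor; apply: (vgeM hval); first exact: vge_signp.
apply: (vge_det hval) => i' l; rewrite !mxE liftK; exact: AI.
Qed.
End Step.
End Mat.
Section Fin.
Variables (K : fieldType) (R : realType) (vl : K -> R).
Hypothesis hval : nonarch_valuation vl.
Variables (n' : nat) (B : 'M[K]_n'.+1).
Local Notation n := n'.+1.
Hypothesis hB : upper_triangular B.
Hypothesis hfin : forall S : {set 'I_n},
      nu vl (minor B (first_rows n #|S|) S) \is a fin_num.
Hypothesis hsub : submodular (fun S : {set 'I_n} => nu vl (minor B (first_rows n #|S|) S)).

Lemma Claim_all m : (m <= n)%N -> Claim vl B m.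
Proof.
elim: m => [_|m IHm hm].
  move=> k r c ci hr hc; case: k r c ci hr hc => [|k] r c ci hr hc; last by have := hc ord0.
  have ri : injective r by move=> [].
  have er : im r = first_rows n 0 by apply/setP => x; rewrite /first_rows !inE; apply/imsetP => -[[]].
  have [_ hv] := PI hval hfin ri ci er.
  by rewrite /vge hv lexx orbT.
exact: (Claim_step hval hB hfin hsub hm (IHm (ltnW hm))).
Qed.
End Fin.

Theorem lemma3p4 (K : fieldType) (R : realType) (val : K -> R)
  (hval : nonarch_valuation val) (n : nat) (B : 'M[K]_n)
  (hB : upper_triangular B)
  (hfin : forall S : {set 'I_n},
      nu val (minor B (first_rows n #|S|) S) \is a fin_num)
  (hsub : submodular (fun S : {set 'I_n} => nu val (minor B (first_rows n #|S|) S))) :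
  forall S T : {set 'I_n}, #|S| = #|T| ->
    (nu val (minor B T S) <= nu val (minor B (first_rows n #|S|) S))%E.
Proof.
case: n B hB hfin hsub => [|n'] B hB hfin hsub S T hST.
  by have -> : T = first_rows 0 #|S| by apply/setP => -[].
have hC := Claim_all hval hB hfin hsub (leqnn n'.+1).
rewrite (nuE hfin S) {1}/minor; case: eqP => [h|]; last by rewrite hST.
have hv := hC #|S| (fun i => enum_val (cast_ord h i)) (fun j => enum_val j)
  (@enum_val_inj _ _) (fun i => ltn_ord _) (fun i => ltn_ord _).
have eS : im (fun j : 'I_#|S| => enum_val j) = S by exact: im_enum_val.
rewrite eS in hv; move: hv; rewrite /vge /D /nu.
case: eqP => [_ _|_ /= hv]; first by rewrite leNye.
by rewrite lee_fin lerN2.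
Qed.
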